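(* Let $f:\mathbb{C}^2\to M_2(\mathbb{C})$ be the unital C*-algebra embedding $f(a,b)=\begin{pmatrix}a&0\\0&b\end{pmatrix}$, and let $\sigma:\mathrm{Max}\,\mathbb{C}^2\to\mathcal{T}(\mathbb{C}^2)$ be the quotient map $M\mapsto 1\cdot M\cdot 1$ (sending a closed subspace to the closed two-sided ideal it generates). Then the pushout of $\mathrm{Max}\,f:\mathrm{Max}\,\mathbb{C}^2\to\mathrm{Max}\,M_2(\mathbb{C})$ and $\sigma$ in the category of quantales and quantale homomorphisms is the trivial quantale.
   Context: A quantale is a complete lattice with an associative multiplication $\cdot$ distributing over arbitrary joins in both variables; a quantale homomorphism preserves arbitrary joins and multiplication; a quantale is trivial if its bottom equals its top. For a unital C*-algebra $A$, $\mathrm{Max}\,A$ is the quantale of closed linear subspaces of $A$ with join the closure of the sum and product $M\cdot N$ the closure of the linear span of $\{ab:a\in M,b\in N\}$; its top $1$ is $A$. For a unital *-homomorphism $f:A\to B$, $\mathrm{Max}\,f(M)=\overline{f[M]}$. $\mathcal{T}(\mathbb{C}^2)$ is the locale of closed ideals of $\mathbb{C}^2$. *)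

(* Defs.v *)
From HB Require Import structures.
From mathcomp Require Import all_boot all_order all_algebra all_field.
From mathcomp Require Import complex.
From mathcomp Require Import reals Rstruct.
Import GRing.Theory.
Local Open Scope ring_scope.

Record qstruct := QStruct {
  qcar :> Type;
  qle : qcar -> qcar -> Prop;
  qmul : qcar -> qcar -> qcar
}.

Definition is_lub (Q : qstruct) (S : Q -> Prop) (x : Q) : Prop :=
  (forall y, S y -> qle Q y x) /\
  (forall z, (forall y, S y -> qle Q y z) -> qle Q x z).

Definition is_quantale (Q : qstruct) : Prop :=
  (forall x : Q, qle Q x x) /\
  (forall x y z : Q, qle Q x y -> qle Q y z -> qle Q x z) /\
  (forall x y : Q, qle Q x y -> qle Q y x -> x = y) /\
  (forall S : Q -> Prop, exists x, is_lub Q S x) /\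
  (forall x y z : Q, qmul Q x (qmul Q y z) = qmul Q (qmul Q x y) z) /\
  (forall (a : Q) (S : Q -> Prop) (x : Q), is_lub Q S x ->
     is_lub Q (fun y => exists s, S s /\ y = qmul Q a s) (qmul Q a x)) /\
  (forall (a : Q) (S : Q -> Prop) (x : Q), is_lub Q S x ->
     is_lub Q (fun y => exists s, S s /\ y = qmul Q s a) (qmul Q x a)).

Definition is_qhom (P Q : qstruct) (h : P -> Q) : Prop :=
  (forall (S : P -> Prop) (x : P), is_lub P S x ->
     is_lub Q (fun y => exists s, S s /\ y = h s) (h x)) /\
  (forall x y : P, h (qmul P x y) = qmul Q (h x) (h y)).

Definition is_trivial_quantale (Q : qstruct) : Prop :=
  exists bot top : Q,
    is_lub Q (fun _ => False) bot /\ is_lub Q (fun _ => True) top /\ bot = top.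

Definition is_qpushout (A B C : qstruct) (f : A -> B) (g : A -> C)
    (P : qstruct) (i1 : B -> P) (i2 : C -> P) : Prop :=
  is_quantale P /\ is_qhom B P i1 /\ is_qhom C P i2 /\
  (forall a, i1 (f a) = i2 (g a)) /\
  (forall (Q : qstruct) (q1 : B -> Q) (q2 : C -> Q),
     is_quantale Q -> is_qhom B Q q1 -> is_qhom C Q q2 ->
     (forall a, q1 (f a) = q2 (g a)) ->
     exists u : P -> Q,
       is_qhom P Q u /\ (forall b, u (i1 b) = q1 b) /\ (forall c, u (i2 c) = q2 c) /\
       (forall u' : P -> Q,
          is_qhom P Q u' -> (forall b, u' (i1 b) = q1 b) ->
          (forall c, u' (i2 c) = q2 c) -> forall x, u' x = u x)).

Definition unitQ : qstruct := QStruct unit (fun _ _ => True) (fun _ _ => tt).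

(* Max A for a finite-dimensional algebra A: all subspaces are closed, the   *)
(* closure of a sum is the sum, and the product is the span of products,     *)
(* i.e. MathComp's (U * V)%VS.                                               *)

Set Implicit Arguments.
Unset Strict Implicit.
Unset Printing Implicit Defensive.

Definition MaxQ (K : fieldType) (A : falgType K) : qstruct :=
  QStruct {vspace A} (fun U V => (U <= V)%VS) (fun U V => (U * V)%VS).

Definition Maxmap (K : fieldType) (A B : falgType K) (f : 'Hom(A, B))
    (U : {vspace A}) : {vspace B} := (f @: U)%VS.

Definition is_ideal (K : fieldType) (A : falgType K) (I : {vspace A}) : bool :=
  ((fullv * I <= I) && (I * fullv <= I))%VS.

Lemma is_ideal_mul (K : fieldType) (A : falgType K) (I J : {vspace A}) :
  is_ideal I -> is_ideal J -> is_ideal (I * J)%VS.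
Proof.
move=> /andP[I1 I2] /andP[J1 J2]; apply/andP; split.
  by rewrite prodvA; apply: prodvSl.
by rewrite -prodvA; apply: prodvSr.
Qed.

Lemma is_ideal_sigma (K : fieldType) (A : falgType K) (M : {vspace A}) :
  is_ideal (fullv * M * fullv)%VS.
Proof.
apply/andP; split.
  by rewrite !prodvA; do 2 apply: prodvSl; exact: subvf.
by rewrite -!prodvA; do 2 apply: prodvSr; exact: subvf.
Qed.

Definition idealT (K : fieldType) (A : falgType K) :=
  {I : {vspace A} | is_ideal I}.

Definition idealT_mul (K : fieldType) (A : falgType K) (I J : idealT A) : idealT A :=
  exist _ (proj1_sig I * proj1_sig J)%VS
    (is_ideal_mul (proj2_sig I) (proj2_sig J)).

Definition TQ (K : fieldType) (A : falgType K) : qstruct :=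
  QStruct (idealT A) (fun I J => (proj1_sig I <= proj1_sig J)%VS) (@idealT_mul K A).

(* sigma : Max A -> T(A), M |-> 1 . M . 1 (1 = top of Max A = A) *)
Definition sigmaT (K : fieldType) (A : falgType K) (M : {vspace A}) : idealT A :=
  exist _ (fullv * M * fullv)%VS (is_ideal_sigma M).

Definition Cx := complex Rdefinitions.R.

HB.instance Definition _ := GRing.Lalgebra_isComAlgebra.Build Cx (Cx^o * Cx^o)%type.
HB.instance Definition _ := Algebra_isFalgebra.Build Cx (Cx^o * Cx^o)%type.

Definition C2 : falgType (Cx : fieldType) := (Cx^o * Cx^o)%type.
Definition M2 : falgType (Cx : fieldType) := 'M[Cx]_2.

Definition fdiag_fun (x : C2) : M2 :=
  \matrix_(i < 2, j < 2)
    (if i == j then (if i == 0 :> nat then (x.1 : Cx) else (x.2 : Cx)) else 0).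

Definition fdiag : 'Hom(C2, M2) := linfun fdiag_fun.

(* Main.v *)
Require Import Defs.
From HB Require Import structures.
From mathcomp Require Import all_boot all_algebra all_field complex.
From mathcomp Require Import reals Rstruct.
From Stdlib Require Import Classical.
Import GRing.Theory.
Local Open Scope ring_scope.

Lemma fdiag_lin : linear fdiag_fun.
Proof.
move=> a x y; apply/matrixP=> i j; rewrite !mxE.
case: (i == j); case: (i == 0 :> nat) => /=; rewrite ?mulr0 ?addr0 //.
Qed.
HB.instance Definition _ := GRing.isLinear.Build _ C2 M2 _ fdiag_fun fdiag_lin.

Definition x10 : C2 := ((1 : Cx), (0 : Cx)) : (Cx * Cx)%type.
Definition x01 : C2 := ((0 : Cx), (1 : Cx)) : (Cx * Cx)%type.
Definition e11 : M2 := delta_mx 0 0.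
Definition e22 : M2 := delta_mx 1 1.
Definition a1 : M2 := e11 + delta_mx 0 1.
Definition b1 : M2 := e11 - delta_mx 1 0.
Definition a2 : M2 := e22 + delta_mx 1 0.
Definition b2 : M2 := e22 - delta_mx 0 1.

Ltac mxc := apply/matrixP=> -[[|[|//]]] ? -[[|[|//]]] ?; rewrite ?lfunE /= !mxE ?big_ord_recl ?big_ord0 ?mxE /=;
  rewrite ?(mulr0, mul0r, addr0, add0r, subr0, sub0r, mulr1, mul1r, oppr0, subrr).

Lemma fd1 : fdiag 1 = 1. Proof. by mxc. Qed.
Lemma fd10 : fdiag x10 = e11. Proof. by mxc. Qed.
Lemma fd01 : fdiag x01 = e22. Proof. by mxc. Qed.
Lemma m1 : a1 * e11 = e11. Proof. by mxc. Qed.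
Lemma m2 : e11 * b1 = e11. Proof. by mxc. Qed.
Lemma m3 : e11 * e11 = e11. Proof. by mxc. Qed.
Lemma m4 : a1 * b1 = 0. Proof. by mxc. Qed.
Lemma n1 : a2 * e22 = e22. Proof. by mxc. Qed.
Lemma n2 : e22 * b2 = e22. Proof. by mxc. Qed.
Lemma n3 : e22 * e22 = e22. Proof. by mxc. Qed.
Lemma n4 : a2 * b2 = 0. Proof. by mxc; rewrite ?addNr. Qed.

Lemma o1 : (1 : M2) = e11 + e22. Proof. apply/(@matrixP _ 2 2)=> -[[|[|//]]] ? -[[|[|//]]] ?; rewrite !mxE /=; by rewrite ?(addr0, add0r). Qed.

Section Gen.
Variable Q : qstruct.
Hypothesis hQ : is_quantale Q.

Lemma qrefl x : qle Q x x. Proof. by case: hQ. Qed.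
Lemma qtrans x y z : qle Q x y -> qle Q y z -> qle Q x z.
Proof. by case: hQ => _ [t _]; apply: t. Qed.
Lemma qanti x y : qle Q x y -> qle Q y x -> x = y.
Proof. by case: hQ => _ [_ [t _]]; apply: t. Qed.

Lemma lub2 {P : qstruct} {x y : P} : qle P y y -> qle P x y ->
  is_lub P (fun z => z = x \/ z = y) y.
Proof. move=> r xy; split; first by move=> z [->|->]. by move=> z H; apply: H; right. Qed.

Lemma qmulr_mono a x y : qle Q x y -> qle Q (qmul Q a x) (qmul Q a y).
Proof.
move=> xy; case: hQ => _ [_ [_ [_ [_ [dl _]]]]].
have [ub _] := dl a _ _ (lub2 (qrefl y) xy).
by apply: ub; exists x; split => //; left.
Qed.

Lemma qmull_mono a x y : qle Q x y -> qle Q (qmul Q x a) (qmul Q y a).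
Proof.
move=> xy; case: hQ => _ [_ [_ [_ [_ [_ dr]]]]].
have [ub _] := dr a _ _ (lub2 (qrefl y) xy).
by apply: ub; exists x; split => //; left.
Qed.
End Gen.
Arguments qrefl {Q} hQ x.
Arguments qtrans {Q} hQ {x y z}.
Arguments qanti {Q} hQ {x y}.
Arguments qmulr_mono {Q} hQ a {x y}.
Arguments qmull_mono {Q} hQ a {x y}.

Lemma hom_mono (P Q : qstruct) (h : P -> Q) : (forall x, qle P x x) ->
  is_qhom P Q h -> forall x y, qle P x y -> qle Q (h x) (h y).
Proof.
move=> r [hj _] x y xy.
have [ub _] := hj _ _ (lub2 (r y) xy).
by apply: ub; exists x; split => //; left.
Qed.

Lemma sig_top (c : idealT C2) : qle (TQ C2) c (sigmaT 1%VS).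
Proof.
rewrite /= prodv1; apply: subv_trans (subvf _) _.
by rewrite -{1}(prodv1 fullv); apply: prodvSr; apply: subvf.
Qed.

Lemma sig_bot (c : idealT C2) : qle (TQ C2) (sigmaT 0%VS) c.
Proof. by rewrite /= prodv0 prod0v sub0v. Qed.

Lemma Mline v : Maxmap fdiag <[v]>%VS = <[fdiag v]>%VS.
Proof. by rewrite /Maxmap limg_line. Qed.

Section Collapse.
Variable Q : qstruct.
Hypothesis hQ : is_quantale Q.
Variables (q1 : MaxQ M2 -> Q) (q2 : TQ C2 -> Q).
Hypothesis h1 : is_qhom (MaxQ M2) Q q1.
Hypothesis h2 : is_qhom (TQ C2) Q q2.
Hypothesis hc : forall a, q1 (Maxmap fdiag a) = q2 (sigmaT a).

Let u := q1 <[1]>%VS.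
Let z := q1 0%VS.

Lemma q1M X Y : q1 (X * Y)%VS = qmul Q (q1 X) (q1 Y).
Proof. by case: h1 => _ ->. Qed.

Lemma q1mono X Y : (X <= Y)%VS -> qle Q (q1 X) (q1 Y).
Proof. by apply: (@hom_mono _ _ q1 _ h1); exact: subvv. Qed.

Lemma q2mono X Y : qle (TQ C2) X Y -> qle Q (q2 X) (q2 Y).
Proof. by apply: (@hom_mono _ _ q2 _ h2) => x; exact: subvv. Qed.

Lemma le_u v : qle Q (q1 <[fdiag v]>%VS) u.
Proof.
rewrite -Mline hc /u -fd1 -Mline hc; apply: q2mono; exact: sig_top.
Qed.

Lemma kill e a b : a * e = e -> e * b = e -> e * e = e -> a * b = 0 ->
  qle Q (q1 <[e]>%VS) u -> qle Q (q1 <[e]>%VS) z.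
Proof.
move=> ae eb ee ab pu.
have pa : qle Q (q1 <[e]>%VS) (q1 <[a]>%VS).
  have -> : q1 <[a]>%VS = qmul Q (q1 <[a]>%VS) u by rewrite /u -q1M prodv1.
  apply: (qtrans hQ _ (qmulr_mono hQ _ pu)).
  by rewrite -q1M prodv_line ae; exact: qrefl hQ _.
have pb : qle Q (q1 <[e]>%VS) (q1 <[b]>%VS).
  have -> : q1 <[b]>%VS = qmul Q u (q1 <[b]>%VS) by rewrite /u -q1M prod1v.
  apply: (qtrans hQ _ (qmull_mono hQ _ pu)).
  by rewrite -q1M prodv_line eb; exact: qrefl hQ _.
have -> : q1 <[e]>%VS = qmul Q (q1 <[e]>%VS) (q1 <[e]>%VS) by rewrite -q1M prodv_line ee.
apply: (qtrans hQ (qmull_mono hQ _ pa)).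
apply: (qtrans hQ (qmulr_mono hQ _ pb)).
by rewrite -q1M prodv_line ab /z; exact: qrefl hQ _.
Qed.

Lemma u_z : qle Q u z.
Proof.
have p1 : qle Q (q1 <[e11]>%VS) z.
  apply: (@kill _ _ _ m1 m2 m3 m4); rewrite -fd10; exact: le_u.
have p2 : qle Q (q1 <[e22]>%VS) z.
  apply: (@kill _ _ _ n1 n2 n3 n4); rewrite -fd01; exact: le_u.
have L : is_lub (MaxQ M2) (fun X => X = <[e11]>%VS \/ X = <[e22]>%VS)
            (<[e11]> + <[e22]>)%VS.
  split; first by move=> y [->|->] /=; [exact: addvSl | exact: addvSr].
  by move=> w H; rewrite /= subv_add; apply/andP; split; apply: H; [left|right].
have [hj _] := h1; have [_ lst] := hj _ _ L.
have sub : (<[1]> <= <[e11]> + <[e22]>)%VS.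
  by rewrite -memvE o1; apply: memv_add; apply: memv_line.
apply: (qtrans hQ (q1mono _ _ sub)).
by apply: lst => y [s [[->|->] ->]].
Qed.

Lemma q1const X : q1 X = z.
Proof.
apply: (qanti hQ).
  have -> : q1 X = qmul Q u (q1 X) by rewrite /u -q1M prod1v.
  apply: (qtrans hQ (qmull_mono hQ _ u_z)).
  by rewrite /z -q1M prod0v; exact: qrefl hQ _.
by apply: q1mono; apply: sub0v.
Qed.

Lemma q2const c : q2 c = z.
Proof.
apply: (qanti hQ).
  apply: (qtrans hQ (q2mono _ _ (sig_top c))).
  by rewrite -hc Mline fd1; apply: u_z.
apply: (qtrans hQ _ (q2mono _ _ (sig_bot c))).
by rewrite -hc /Maxmap limg0; exact: qrefl hQ _.
Qed.

Lemma z_bot : is_lub Q (fun _ => False) z.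
Proof.
have [hj _] := h1.
have L : is_lub (MaxQ M2) (fun _ => False) 0%VS.
  by split => // w _; exact: sub0v.
have [_ lst] := hj _ _ L; split; first by [].
by move=> w _; apply: lst => y [s []].
Qed.
End Collapse.

Lemma const_hom (R Q : qstruct) (q1 : MaxQ M2 -> Q) :
  is_quantale Q -> is_qhom (MaxQ M2) Q q1 -> is_qhom R Q (fun _ => q1 0%VS).
Proof.
move=> hQ h1; split; last first.
  move=> _ _ /=; have [_ hm] := h1; by rewrite -hm /= prod0v.
move=> S x _; case: (classic (exists s, S s)) => [[s0 Ss0]|nS].
  split; first by move=> y [s [_ ->]]; exact: qrefl hQ _.
  by move=> w H; apply: H; exists s0; split.
have [_ lst] := @z_bot _ _ h1; split.
  by move=> y [s [Ss _]]; case: nS; exists s.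
by move=> w _; apply: lst => y [].
Qed.

Theorem lemma3p7 :
  is_qpushout (MaxQ C2) (MaxQ M2) (TQ C2)
    (Maxmap fdiag) (@sigmaT _ C2) unitQ (fun _ => tt) (fun _ => tt) /\
  (forall (P : qstruct) (i1 : MaxQ M2 -> P) (i2 : TQ C2 -> P),
     is_qpushout (MaxQ C2) (MaxQ M2) (TQ C2)
       (Maxmap fdiag) (@sigmaT _ C2) P i1 i2 ->
     is_trivial_quantale P).
Proof.
have UQ : is_quantale unitQ.
  split; first by [].
  split; first by [].
  split; first by case; case.
  split; first by move=> S; exists tt; split.
  split; first by [].
  by split; move=> *; split.
have UH : forall P, is_qhom P unitQ (fun _ => tt).
  by move=> P; split; last by []; move=> *; split.
split.
  split; first exact: UQ.
  split; first exact: UH.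
  split; first exact: UH.
  split; first by [].
  move=> Q q1 q2 hQ h1 h2 hc; exists (fun _ => q1 0%VS).
  split; first exact: const_hom.
  split; first by move=> b; rewrite (@q1const _ hQ _ _ h1 h2 hc b).
  split; first by move=> c; rewrite (@q2const _ hQ _ _ h1 h2 hc c).
  by move=> u' _ e1 _ []; exact: (e1 0%VS).
move=> P i1 i2 [hP [hi1 [hi2 [hc U]]]].
have c1 := @q1const _ hP _ _ hi1 hi2 hc.
have c2 := @q2const _ hP _ _ hi1 hi2 hc.
have [u [hu [ub [uc uniq]]]] := U P i1 i2 hP hi1 hi2 hc.
have idh : is_qhom P P id.
  split; last by [].
  move=> S x [ub' lst]; split; first by move=> y [s [Ss ->]]; exact: ub'.
  by move=> w H; apply: lst => y Sy; apply: H; exists y; split.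
have cst : is_qhom P P (fun _ => i1 0%VS) by exact: const_hom.
have all : forall x : P, x = i1 0%VS.
  move=> x.
  have e1 := uniq id idh (fun b => erefl) (fun c => erefl) x.
  have e2 := uniq _ cst (fun b => esym (c1 b)) (fun c => esym (c2 c)) x.
  by rewrite /= in e1 e2; rewrite e1 -e2.
have [_ [_ [_ [lubex _]]]] := hP.
have [b Hb] := lubex (fun _ => False).
have [t Ht] := lubex (fun _ => True).
by exists b, t; split; [done | split; [done | rewrite (all b) (all t)]].
Qed.
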